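(* Let $U_q(H_1,H_2,X^\pm)$ be the Hopf algebra described in the context, and put $E=K_2X^+$, $F=K_2^{-1}X^-$. Then $U_q(H_1,H_2,X^\pm)$ is quasitriangular with universal $R$-matrix $$\mathcal{R}=e^{-i\frac{\pi}{4}H_2\otimes H_2}\,q^{\frac14\left(H_1\otimes H_1-H_2\otimes H_2\right)}\left(1\otimes 1+(1-q^2)\,E\otimes F\right),$$ i.e. $\mathcal R$ is invertible, $\tau\circ\Delta(a)=\mathcal R\,\Delta(a)\,\mathcal R^{-1}$ for all $a$ (with $\tau$ the flip), $(\Delta\otimes\mathrm{id})\mathcal R=\mathcal R_{13}\mathcal R_{23}$ and $(\mathrm{id}\otimes\Delta)\mathcal R=\mathcal R_{13}\mathcal R_{12}$.
   Context: $q$ is a deformation parameter and exponentials of the generators are understood formally (e.g. as formal power series). Set $K_1=q^{H_1/2}$ and $K_2=e^{i\frac{\pi}{2}H_2}q^{H_2/2}$. $U_q(H_1,H_2,X^\pm)$ is the Hopf algebra generated by $H_1,H_2,X^+,X^-$ with relations $[H_1,H_2]=0$, $[H_1,X^\pm]=\pm2X^\pm$, $[H_2,X^\pm]=\mp 2X^\pm$, $[X^+,X^-]=\frac{K_1K_2-K_1^{-1}K_2^{-1}}{q-q^{-1}}$, $(X^\pm)^2=0$; coproduct $\Delta H_i=H_i\otimes1+1\otimes H_i$, $\Delta X^+=X^+\otimes K_1+K_2^{-1}\otimes X^+$, $\Delta X^-=X^-\otimes K_2+K_1^{-1}\otimes X^-$ (so $\Delta K_i=K_i\otimes K_i$); counit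 $\varepsilon(H_i)=\varepsilon(X^\pm)=0$; antipode $S(H_i)=-H_i$, $S(X^+)=-qK_1^{-1}K_2X^+$, $S(X^-)=qK_1K_2^{-1}X^-$. For $\mathcal R=\sum_i a_i\otimes b_i$, $\mathcal R_{12}=\sum a_i\otimes b_i\otimes1$, $\mathcal R_{13}=\sum a_i\otimes 1\otimes b_i$, $\mathcal R_{23}=\sum 1\otimes a_i\otimes b_i$. *)

(* Defs.v *)
From mathcomp Require Import all_boot all_algebra.
From mathcomp Require Import complex.
From mathcomp Require Import reals sequences exp trigo.
Set Implicit Arguments. Unset Strict Implicit. Unset Printing Implicit Defensive.
Import GRing.Theory Num.Theory.
Local Open Scope ring_scope.
Local Open Scope complex_scope.

Definition cexp {R : realType} (z : R[i]) : R[i] :=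
  let: a +i* b := z in (expR a * cos b) +i* (expR a * sin b).

Section Model.
Variable R : realType.
Local Notation C := R[i].

(* The deformation parameter: q = e^h, so that q^x := e^(h x) makes sense   *)
(* for formal (here: complex-valued) exponents x.                          *)
Variable h : C.
Definition qpow (x : C) : C := cexp (h * x).
Definition q : C := qpow 1.
Definition ipi : C := 'i * (pi%:C).

(* Cartan functions of a weight x = (x1, x2) (values of H1, H2). *)
Definition K1f (x : C * C) : C := qpow (x.1 / 2%:R).
Definition K2f (x : C * C) : C := cexp (ipi / 2%:R * x.2) * qpow (x.2 / 2%:R).
Definition Cf (x : C * C) : C :=
  (K1f x * K2f x - (K1f x * K2f x)^-1) / (q - q^-1).

(* Completed n-fold tensor power of U_q(H1,H2,X^+-).                         *)
(* By the relations, U has the PBW basis  phi(H1,H2) (X^+)^e (X^-)^f with     *)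
(* e,f in {0,1}.  Allowing "formal" functions phi of the Cartan generators   *)
(* (exponentials etc.), an element of the completed n-fold tensor power is   *)
(*   sum_M  a_M(H^(1),...,H^(n)) * M ,                                       *)
(* where M ranges over the tensor products of the 4 monomials               *)
(* (X^+)^e (X^-)^f in each leg, the coefficient a_M is a function of the     *)
(* 2n Cartan generators H^(k) = (H1^(k),H2^(k)) (written to the left), and   *)
(* leg k of M is (M k) = (e_k, f_k).                                        *)
Definition mon n := {ffun 'I_n -> bool * bool}.
Definition Elt n := mon n -> ('I_n -> C * C) -> C.

(* commutation  (X^+)^e (X^-)^f phi(H1,H2) = phi(H1-2e+2f, H2+2e-2f) (X^+)^e (X^-)^f *)
Definition shift (m : bool * bool) (x : C * C) : C * C :=
  (x.1 - (m.1%:R *+ 2) + (m.2%:R *+ 2), x.2 + (m.1%:R *+ 2) - (m.2%:R *+ 2)).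

(* single-leg structure constants:                                          *)
(* (X^+)^e (X^-)^f (X^+)^e' (X^-)^f' = sum_m'' c m m' m''(H) m''            *)
(* using X^- X^+ = X^+ X^- - Cf(H), (X^+)^2 = (X^-)^2 = 0.                  *)
Definition coef (m m' m'' : bool * bool) (x : C * C) : C :=
  let: (e, f) := m in let: (e', f') := m' in
  if f && e' then
    ((~~ e && ~~ f' && (m'' == (true, true)))%:R)
    - ((m'' == (e, f'))%:R) * Cf (shift (e, false) x)
  else if (e && e') || (f && f') then 0
  else ((m'' == (e || e', f || f'))%:R).

Definition mshift n (M : mon n) (x : 'I_n -> C * C) : 'I_n -> C * C :=
  fun k => shift (M k) (x k).

Definition eadd n (a b : Elt n) : Elt n := fun M x => a M x + b M x.
Definition escale n (c : C) (a : Elt n) : Elt n := fun M x => c * a M x.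
Definition emul n (a b : Elt n) : Elt n := fun M'' x =>
  \sum_(M : mon n) \sum_(M' : mon n)
     a M x * b M' (mshift M x) * \prod_(k < n) coef (M k) (M' k) (M'' k) (x k).

Definition mon0 n : mon n := [ffun _ => (false, false)].
Definition efun n (phi : ('I_n -> C * C) -> C) : Elt n :=
  fun M x => if M == mon0 n then phi x else 0.
Definition eone n : Elt n := efun (fun _ => 1).
Definition monk n (k : 'I_n) (m : bool * bool) : mon n :=
  [ffun j => if j == k then m else (false, false)].
Definition Xp n (k : 'I_n) : Elt n := fun M _ => (M == monk k (true, false))%:R.
Definition Xm n (k : 'I_n) : Elt n := fun M _ => (M == monk k (false, true))%:R.
Definition K1 n (k : 'I_n) : Elt n := efun (fun x => K1f (x k)).
Definition K2 n (k : 'I_n) : Elt n := efun (fun x => K2f (x k)).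
Definition K1i n (k : 'I_n) : Elt n := efun (fun x => (K1f (x k))^-1).
Definition K2i n (k : 'I_n) : Elt n := efun (fun x => (K2f (x k))^-1).

(* Leg embedding A_n -> A_m along an injection j : 'I_n -> 'I_m,            *)
(* e.g. a (x) b |-> a (x) 1 (x) b  for  R |-> R_13.                         *)
Definition emb n m (j : 'I_n -> 'I_m) (a : Elt n) : Elt m := fun M x =>
  if [forall l : 'I_m, (l \notin codom j) ==> (M l == (false, false))]
  then a [ffun k => M (j k)] (fun k => x (j k)) else 0.

Definition i0 : 'I_2 := ord0.
Definition i1 : 'I_2 := ord_max.
Definition flip2 (k : 'I_2) : 'I_2 := if k == i0 then i1 else i0.
Definition tau (a : Elt 2) : Elt 2 := fun M x => a [ffun k => M (flip2 k)] (fun k => x (flip2 k)).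

(* General algebra map A_n -> A_m determined by the image of the Cartan    *)
(* generators (a substitution L on weights) and the images xp k, xm k of     *)
(* X^+ and X^- in leg k:                                                     *)
(*   sum_M a_M(H) M  |->  sum_M a_M(L(H')) prod_k xp_k^(e_k) xm_k^(f_k).    *)
Definition monimg n m (xp xm : 'I_n -> Elt m) (M : mon n) : Elt m :=
  foldr (fun k acc => emul (emul (if (M k).1 then xp k else @eone m)
                                  (if (M k).2 then xm k else @eone m)) acc)
        (@eone m) (enum 'I_n).
Definition subst n m (L : ('I_m -> C * C) -> ('I_n -> C * C))
  (xp xm : 'I_n -> Elt m) (a : Elt n) : Elt m := fun M'' y =>
  \sum_(M : mon n) emul (efun (fun y => a M (L y))) (monimg xp xm M) M'' y.

Definition addw (u v : C * C) : C * C := (u.1 + v.1, u.2 + v.2).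

(* coproduct  Delta : A_1 -> A_2 :  Delta H_i = H_i (x) 1 + 1 (x) H_i,      *)
(* Delta X^+ = X^+ (x) K1 + K2^-1 (x) X^+,  Delta X^- = X^- (x) K2 + K1^-1 (x) X^- *)
Definition DXp : Elt 2 := eadd (emul (Xp i0) (K1 i1)) (emul (K2i i0) (Xp i1)).
Definition DXm : Elt 2 := eadd (emul (Xm i0) (K2 i1)) (emul (K1i i0) (Xm i1)).
Definition Delta (a : Elt 1) : Elt 2 :=
  subst (fun y _ => addw (y i0) (y i1)) (fun _ => DXp) (fun _ => DXm) a.

Definition j0 : 'I_3 := ord0.
Definition j1 : 'I_3 := inord 1.
Definition j2 : 'I_3 := ord_max.
Definition leg01 (k : 'I_2) : 'I_3 := if k == i0 then j0 else j1.
Definition leg12 (k : 'I_2) : 'I_3 := if k == i0 then j1 else j2.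
Definition leg02 (k : 'I_2) : 'I_3 := if k == i0 then j0 else j2.
Definition leg2 (k : 'I_1) : 'I_3 := j2.
Definition leg0 (k : 'I_1) : 'I_3 := j0.

Definition DeltaId (a : Elt 2) : Elt 3 :=
  subst (fun y k => if k == i0 then addw (y j0) (y j1) else y j2)
        (fun k => if k == i0 then emb leg01 DXp else Xp j2)
        (fun k => if k == i0 then emb leg01 DXm else Xm j2) a.
Definition IdDelta (a : Elt 2) : Elt 3 :=
  subst (fun y k => if k == i0 then y j0 else addw (y j1) (y j2))
        (fun k => if k == i0 then Xp j0 else emb leg12 DXp)
        (fun k => if k == i0 then Xm j0 else emb leg12 DXm) a.

Definition R12 (a : Elt 2) : Elt 3 := emb leg01 a.
Definition R13 (a : Elt 2) : Elt 3 := emb leg02 a.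
Definition R23 (a : Elt 2) : Elt 3 := emb leg12 a.

Inductive inU : Elt 1 -> Prop :=
| inU_const c : inU (efun (fun _ => c))
| inU_H1 : inU (efun (fun x => (x ord0).1))
| inU_H2 : inU (efun (fun x => (x ord0).2))
| inU_Xp : inU (Xp ord0)
| inU_Xm : inU (Xm ord0)
| inU_K1 : inU (K1 ord0)
| inU_K2 : inU (K2 ord0)
| inU_K1i : inU (K1i ord0)
| inU_K2i : inU (K2i ord0)
| inU_add a b : inU a -> inU b -> inU (eadd a b)
| inU_mul a b : inU a -> inU b -> inU (emul a b).

Definition Rmat : Elt 2 :=
  emul (efun (fun y => cexp (- (ipi / 4%:R) * ((y i0).2 * (y i1).2)) *
                      qpow (((y i0).1 * (y i1).1 - (y i0).2 * (y i1).2) / 4%:R)))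
       (eadd (@eone 2)
             (escale (1 - q ^+ 2)
                (emul (emul (K2 i0) (Xp i0)) (emul (K2i i1) (Xm i1))))).

End Model.

(* Main.v *)
Require Import Defs.
From mathcomp Require Import all_boot all_algebra.
From mathcomp Require Import complex.
From mathcomp Require Import reals sequences exp trigo boolp.
From mathcomp Require Import ring.
Import GRing.Theory Num.Theory.
Local Open Scope ring_scope.
Local Open Scope complex_scope.
Set Implicit Arguments. Unset Strict Implicit. Unset Printing Implicit Defensive.
Section S.
Variable R : realType.
Local Notation C := R[i].
Lemma cexpD (z w : C) : cexp (z + w) = cexp z * cexp w.
Proof.
case: z => a b; case: w => c d => /=.
rewrite expRD cosD sinD; congr (_ +i* _); ring.
Qed.
Lemma cexp0 : cexp (0 : C) = 1.
Proof. by rewrite /= expR0 cos0 sin0 !mul1r. Qed.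
Lemma cexp_neq0 (z : C) : cexp z != 0.
Proof.
apply/eqP => E.
have : cexp z * cexp (-z) = 1 by rewrite -cexpD subrr cexp0.
by rewrite E mul0r => /eqP; rewrite eq_sym oner_eq0.
Qed.
Lemma cexpN (z : C) : cexp (- z) = (cexp z)^-1.
Proof.
have H : cexp z * cexp (-z) = 1 by rewrite -cexpD subrr cexp0.
by apply: (mulfI (cexp_neq0 z)); rewrite H mulfV // cexp_neq0.
Qed.
Lemma cexp_ipi : cexp (ipi R) = -1.
Proof.
rewrite /ipi /= !mul0r mul1r subr0 !add0r expR0 !mul1r cospi sinpi.
by apply/eqP; rewrite eq_complex /= oppr0 !eqxx.
Qed.

Variable h : C.
Local Notation q := (q h).
Definition Af (u v : C * C) : C :=
  cexp (- (ipi R / 4%:R) * (u.2 * v.2)) * qpow h ((u.1 * v.1 - u.2 * v.2) / 4%:R).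
Definition s10 := (true, false).
Definition s01 := (false, true).
Arguments shift : simpl never.

Lemma shift00 (u : C * C) : shift (false, false) u = u.
Proof. by case: u => a b; rewrite /shift /=; congr (_, _); ring. Qed.
Lemma shift11 (u : C * C) : shift (true, true) u = u.
Proof. by case: u => a b; rewrite /shift /=; congr (_, _); ring. Qed.

Lemma two_neq0 : (2%:R : C) != 0. Proof. by rewrite pnatr_eq0. Qed.
Lemma four_neq0 : (4%:R : C) != 0. Proof. by rewrite pnatr_eq0. Qed.

Ltac cexp_solve :=
  rewrite /Af /K1f /K2f /qpow /Defs.q ?invfM -?cexpN -?cexpD; congr cexp;
  rewrite /shift /addw /=; field; by rewrite ?two_neq0 ?four_neq0.

Lemma K1f_s10 u : K1f h (shift s10 u) = K1f h u * q^-1.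
Proof. cexp_solve. Qed.
Lemma K1f_s01 u : K1f h (shift s01 u) = K1f h u * q.
Proof. cexp_solve. Qed.
Lemma K2f_s10' u : K2f h (shift s10 u) = cexp (ipi R) * (K2f h u * q).
Proof. cexp_solve. Qed.
Lemma K2f_s10 u : K2f h (shift s10 u) = - (K2f h u * q).
Proof. by rewrite K2f_s10' cexp_ipi mulN1r. Qed.
Lemma K2f_s01' u : K2f h (shift s01 u) = cexp (- ipi R) * (K2f h u * q^-1).
Proof. cexp_solve. Qed.
Lemma K2f_s01 u : K2f h (shift s01 u) = - (K2f h u * q^-1).
Proof. by rewrite K2f_s01' cexpN cexp_ipi invrN1 mulN1r. Qed.
Lemma Af_s10l u v : Af (shift s10 u) v = Af u v * (K1f h v * K2f h v)^-1.
Proof. cexp_solve. Qed.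
Lemma Af_s01l u v : Af (shift s01 u) v = Af u v * (K1f h v * K2f h v).
Proof. cexp_solve. Qed.
Lemma Af_s10r u v : Af u (shift s10 v) = Af u v * (K1f h u * K2f h u)^-1.
Proof. cexp_solve. Qed.
Lemma Af_s01r u v : Af u (shift s01 v) = Af u v * (K1f h u * K2f h u).
Proof. cexp_solve. Qed.
Lemma Af_addl u w v : Af (addw u w) v = Af u v * Af w v.
Proof. cexp_solve. Qed.
Lemma Af_addr u v w : Af u (addw v w) = Af u v * Af u w.
Proof. cexp_solve. Qed.
Lemma K2f_add u w : K2f h (addw u w) = K2f h u * K2f h w.
Proof. cexp_solve. Qed.
Lemma K1f_add u w : K1f h (addw u w) = K1f h u * K1f h w.
Proof. cexp_solve. Qed.
Lemma addw_s (u v : C * C) : addw (shift s10 u) (shift s01 v) = addw u v.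
Proof. by rewrite /addw /shift /=; congr (_, _); ring. Qed.
Lemma addw_s' (u v : C * C) : addw (shift s01 u) (shift s10 v) = addw u v.
Proof. by rewrite /addw /shift /=; congr (_, _); ring. Qed.
Lemma addwC (u v : C * C) : addw u v = addw v u.
Proof. by rewrite /addw; congr (_, _); ring. Qed.
Lemma Af_neq0 u v : Af u v != 0.
Proof. by rewrite /Af /qpow mulf_neq0 // cexp_neq0. Qed.
Lemma K1f_neq0 u : K1f h u != 0.
Proof. by rewrite /K1f /qpow cexp_neq0. Qed.
Lemma K2f_neq0 u : K2f h u != 0.
Proof. by rewrite /K2f /qpow mulf_neq0 // cexp_neq0. Qed.
Lemma q_neq0 : q != 0.
Proof. by rewrite /Defs.q /qpow cexp_neq0. Qed.
End S.

Section S.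
Variable R : realType.
Local Notation C := R[i].
Variable h : C.
Arguments shift : simpl never.

Definition T n (phi : ('I_n -> C * C) -> C) (P : mon n) : Elt R n :=
  fun M x => if M == P then phi x else 0.
Definition mk1 (a : bool * bool) : mon 1 := [ffun _ => a].
Definition mk2 (a b : bool * bool) : mon 2 := [ffun k => if k == i0 then a else b].
Definition mk3 (a b c : bool * bool) : mon 3 :=
  [ffun k => if k == j0 then a else if k == j1 then b else c].

Lemma ord2 (k : 'I_2) : k = i0 \/ k = i1.
Proof. by case: k => [[|[|//]]] Hk; [left|right]; apply: val_inj. Qed.
Lemma ord3 (k : 'I_3) : [\/ k = j0, k = j1 | k = j2].
Proof.
case: k => [[|[|[|//]]]] Hk; [apply: Or31|apply: Or32|apply: Or33]; apply: val_inj => //=.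
by rewrite /j1 inordK.
Qed.
Lemma j10 : (j1 == j0) = false. Proof. by rewrite /j1 /j0 -val_eqE /= inordK. Qed.
Lemma j20 : (j2 == j0) = false. Proof. by []. Qed.
Lemma j21 : (j2 == j1) = false. Proof. by rewrite /j1 /j2 -val_eqE /= inordK. Qed.

Lemma mk1E a k : mk1 a k = a. Proof. by rewrite ffunE. Qed.
Lemma mk2E0 a b : mk2 a b i0 = a. Proof. by rewrite ffunE. Qed.
Lemma mk2E1 a b : mk2 a b i1 = b. Proof. by rewrite ffunE. Qed.
Lemma mk3E0 a b c : mk3 a b c j0 = a. Proof. by rewrite ffunE. Qed.
Lemma mk3E1 a b c : mk3 a b c j1 = b. Proof. by rewrite ffunE j10 eqxx. Qed.
Lemma mk3E2 a b c : mk3 a b c j2 = c. Proof. by rewrite ffunE j20 j21. Qed.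

Lemma eq_mk2 (M : mon 2) a b : (M == mk2 a b) = (M i0 == a) && (M i1 == b).
Proof.
apply/eqP/andP => [->|[/eqP H0 /eqP H1]]; first by rewrite mk2E0 mk2E1.
by apply/ffunP => k; case: (ord2 k) => ->; rewrite ?mk2E0 ?mk2E1.
Qed.
Lemma eq_mk3 (M : mon 3) a b c :
  (M == mk3 a b c) = [&& M j0 == a, M j1 == b & M j2 == c].
Proof.
apply/eqP/and3P => [->|[/eqP H0 /eqP H1 /eqP H2]]; first by rewrite mk3E0 mk3E1 mk3E2.
by apply/ffunP => k; case: (ord3 k) => ->; rewrite ?mk3E0 ?mk3E1 ?mk3E2.
Qed.
Lemma eq_mk1 (M : mon 1) a : (M == mk1 a) = (M ord0 == a).
Proof.
apply/eqP/eqP => [->|H]; first by rewrite mk1E.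
by apply/ffunP => k; rewrite ord1 mk1E.
Qed.
Lemma mon0_1 : mon0 1 = mk1 (false, false).
Proof. by apply/ffunP => k; rewrite !ffunE. Qed.
Lemma mon0_2 : mon0 2 = mk2 (false, false) (false, false).
Proof. by apply/ffunP => k; rewrite !ffunE; case: ifP. Qed.
Lemma mon0_3 : mon0 3 = mk3 (false, false) (false, false) (false, false).
Proof. by apply/ffunP => k; rewrite !ffunE; case: ifP => //; case: ifP. Qed.

Lemma prod2 (F : 'I_2 -> C) : \prod_(k < 2) F k = F i0 * F i1.
Proof. by rewrite big_ord_recl big_ord1; congr (_ * F _); apply: val_inj. Qed.
Lemma prod3 (F : 'I_3 -> C) : \prod_(k < 3) F k = F j0 * F j1 * F j2.
Proof.
rewrite big_ord_recl big_ord_recl big_ord1 mulrA; congr (_ * F _ * F _); apply: val_inj => //=.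
by rewrite /j1 inordK.
Qed.

Lemma sum_bb (G : bool * bool -> C) :
  \sum_(a : bool * bool) G a = G (true, true) + G (true, false) + (G (false, true) + G (false, false)).
Proof.
rewrite (eq_bigr (fun p => G (p.1, p.2))); last by case.
by rewrite -(pair_big xpredT xpredT (fun a b => G (a, b))) /= !big_bool /= addrA.
Qed.

Lemma sum_mon2 (F : mon 2 -> C) :
  \sum_(M : mon 2) F M = \sum_(a : bool * bool) \sum_(b : bool * bool) F (mk2 a b).
Proof.
rewrite pair_big /=.
rewrite (reindex (fun p : (bool * bool) * (bool * bool) => mk2 p.1 p.2)) //=.
exists (fun M : mon 2 => (M i0, M i1)) => [[a b] _|M _] /=; first by rewrite mk2E0 mk2E1.
by apply/eqP; rewrite eq_sym eq_mk2 !eqxx.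
Qed.

Lemma coef0l m m'' x : coef h (false, false) m m'' x = (m'' == m)%:R.
Proof. by case: m => [[] []]. Qed.
Lemma coef0r m m'' x : coef h m (false, false) m'' x = (m'' == m)%:R.
Proof. by case: m => [[] []]. Qed.

Lemma prod_eqR n (M N : mon n) : \prod_(k < n) ((M k == N k)%:R : C) = (M == N)%:R.
Proof.
case: eqP => [->|ne]; first by rewrite big1 // => k _; rewrite eqxx.
have : ~~ [forall k, M k == N k].
  by apply/negP => /forallP H; apply: ne; apply/ffunP => k; apply/eqP/H.
rewrite negb_forall => /existsP [k Hk].
by rewrite (bigD1 k) //= (negbTE Hk) mul0r.
Qed.

Lemma pc0l n (M N : mon n) x :
  \prod_(k < n) coef h (mon0 n k) (M k) (N k) (x k) = (N == M)%:R.
Proof. by rewrite -prod_eqR; apply: eq_bigr => k _; rewrite ffunE coef0l. Qed.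
Lemma pc0r n (M N : mon n) x :
  \prod_(k < n) coef h (M k) (mon0 n k) (N k) (x k) = (N == M)%:R.
Proof. by rewrite -prod_eqR; apply: eq_bigr => k _; rewrite ffunE coef0r. Qed.

Lemma mshift0 n (x : 'I_n -> C * C) : mshift (mon0 n) x = x.
Proof. by apply: funext => k; rewrite /mshift ffunE shift00. Qed.

Lemma emulTl n phi (P : mon n) (b : Elt R n) :
  emul h (T phi P) b = fun M'' x => \sum_M' phi x * b M' (mshift P x) *
     \prod_(k < n) coef h (P k) (M' k) (M'' k) (x k).
Proof.
apply: funext => M''; apply: funext => x; rewrite /emul (bigD1 P) //= [X in _ + X = _]big1 ?addr0.
  by rewrite /T eqxx.
by move=> M /negbTE HM; apply: big1 => M' _; rewrite /T HM !mul0r.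
Qed.

Lemma emulTr n (a : Elt R n) psi (Q : mon n) :
  emul h a (T psi Q) = fun M'' x => \sum_M a M x * psi (mshift M x) *
     \prod_(k < n) coef h (M k) (Q k) (M'' k) (x k).
Proof.
apply: funext => M''; apply: funext => x; rewrite /emul; apply: eq_bigr => M _.
rewrite (bigD1 Q) //= [X in _ + X = _]big1 ?addr0; first by rewrite /T eqxx.
by move=> M' /negbTE HM; rewrite /T HM mulr0 mul0r.
Qed.

Lemma emulT0l n phi (b : Elt R n) :
  emul h (T phi (mon0 n)) b = fun M x => phi x * b M x.
Proof.
rewrite emulTl; apply: funext => M''; apply: funext => x.
under eq_bigr do rewrite mshift0 pc0l.
rewrite (bigD1 M'') //= eqxx mulr1 [X in _ + X = _]big1 ?addr0 // => M' /negbTE H.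
by rewrite eq_sym H mulr0.
Qed.

Lemma emulT0r n (a : Elt R n) psi :
  emul h a (T psi (mon0 n)) = fun M x => a M x * psi (mshift M x).
Proof.
rewrite emulTr; apply: funext => M''; apply: funext => x.
under eq_bigr do rewrite pc0r.
rewrite (bigD1 M'') //= eqxx mulr1 [X in _ + X = _]big1 ?addr0 // => M' /negbTE H.
by rewrite eq_sym H mulr0.
Qed.

Lemma emulTT n phi psi (P Q : mon n) :
  emul h (T phi P) (T psi Q) = fun M x => phi x * psi (mshift P x) *
     \prod_(k < n) coef h (P k) (Q k) (M k) (x k).
Proof.
rewrite emulTl; apply: funext => M''; apply: funext => x.
rewrite (bigD1 Q) //= [X in _ + X = _]big1 ?addr0; first by rewrite /T eqxx.
by move=> M' /negbTE HM; rewrite /T HM mulr0 mul0r.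
Qed.

Lemma emulT0T n phi psi (P : mon n) :
  emul h (T phi (mon0 n)) (T psi P) = T (fun x => phi x * psi x) P.
Proof.
rewrite emulT0l; apply: funext => M; apply: funext => x; rewrite /T.
by case: eqP; rewrite ?mulr0.
Qed.

Lemma emulTT0 n phi psi (P : mon n) :
  emul h (T phi P) (T psi (mon0 n)) = T (fun x => phi x * psi (mshift P x)) P.
Proof.
rewrite emulT0r; apply: funext => M; apply: funext => x; rewrite /T.
by case: eqP => [->|]; rewrite ?mul0r.
Qed.

Lemma emulDl n (a b c : Elt R n) : emul h (eadd a b) c = eadd (emul h a c) (emul h b c).
Proof.
apply: funext => M; apply: funext => x; rewrite /emul /eadd -big_split.
apply: eq_bigr => M1 _; rewrite -big_split; apply: eq_bigr => M2 _ /=.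
by rewrite !mulrDl.
Qed.
Lemma emulDr n (a b c : Elt R n) : emul h a (eadd b c) = eadd (emul h a b) (emul h a c).
Proof.
apply: funext => M; apply: funext => x; rewrite /emul /eadd -big_split.
apply: eq_bigr => M1 _; rewrite -big_split; apply: eq_bigr => M2 _ /=.
by rewrite mulrDr mulrDl.
Qed.

Lemma efunT n phi : efun phi = T phi (mon0 n). Proof. by []. Qed.
Lemma eoneT n : @eone R n = T (fun _ => 1) (mon0 n). Proof. by []. Qed.

Lemma emul1r n (a : Elt R n) : emul h a (@eone R n) = a.
Proof. by rewrite eoneT emulT0r; apply: funext => M; apply: funext => x; rewrite mulr1. Qed.
Lemma emul1l n (a : Elt R n) : emul h (@eone R n) a = a.
Proof. by rewrite eoneT emulT0l; apply: funext => M; apply: funext => x; rewrite mul1r. Qed.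

Lemma Xp_T n (k : 'I_n) : Xp k = T (fun _ => 1) (monk k (true, false)).
Proof. by apply: funext => M; apply: funext => x; rewrite /Xp /T; case: eqP. Qed.
Lemma Xm_T n (k : 'I_n) : Xm k = T (fun _ => 1) (monk k (false, true)).
Proof. by apply: funext => M; apply: funext => x; rewrite /Xm /T; case: eqP. Qed.

Lemma monk2_0 m : monk i0 m = mk2 m (false, false).
Proof. by apply/ffunP => k; rewrite !ffunE. Qed.
Lemma monk2_1 m : monk i1 m = mk2 (false, false) m.
Proof. by apply/ffunP => k; rewrite !ffunE; case: (ord2 k) => ->. Qed.

Lemma eqT n (f g : ('I_n -> C * C) -> C) P : f =1 g -> T f P = T g P.
Proof. by move=> fg; apply: funext => M; apply: funext => x; rewrite /T fg. Qed.

Lemma DXp_T : DXp h = eadd (T (fun x => K1f h (x i1)) (mk2 (true, false) (false, false)))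
                         (T (fun x => (K2f h (x i0))^-1) (mk2 (false, false) (true, false))).
Proof.
rewrite /DXp !Xp_T /K1 /K2i !efunT emulTT0 emulT0T monk2_0 monk2_1; congr eadd.
by apply: eqT => x; rewrite /mshift ffunE /= shift00 mul1r.
by apply: eqT => x; rewrite mulr1.
Qed.
Lemma DXm_T : DXm h = eadd (T (fun x => K2f h (x i1)) (mk2 (false, true) (false, false)))
                         (T (fun x => (K1f h (x i0))^-1) (mk2 (false, false) (false, true))).
Proof.
rewrite /DXm !Xm_T /K2 /K1i !efunT emulTT0 emulT0T monk2_0 monk2_1; congr eadd.
by apply: eqT => x; rewrite /mshift ffunE /= shift00 mul1r.
by apply: eqT => x; rewrite mulr1.
Qed.

End S.

Section S.
Variable R : realType.
Local Notation C := R[i].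
Variable h : C.
Arguments shift : simpl never.
Arguments Cf : simpl never.
Arguments K1f : simpl never.
Arguments K2f : simpl never.
Arguments Af : simpl never.
Arguments Defs.q : simpl never.

Definition Bf (u v : C * C) : C := Af h u v * ((1 - q h ^+ 2) * (K2f h u * (K2f h v)^-1)).
Definition PEF := mk2 (true, false) (false, true).

Lemma Rmat_T : Rmat h = eadd (T (fun y => Af h (y i0) (y i1)) (mon0 2))
                             (T (fun y => Bf (y i0) (y i1)) PEF).
Proof.
rewrite /Rmat efunT emulT0l /K2 /K2i !efunT Xp_T Xm_T !emulT0T emulTT.
apply: funext => M; apply: funext => x.
rewrite /eadd /escale eoneT /T prod2 /mshift monk2_0 monk2_1 /PEF /Bf mon0_2 !eq_mk2 !mk2E0 !mk2E1 /=.
rewrite shift00 /Af.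
case: (M i0) => [[] []]; case: (M i1) => [[] []] /=; ring.
Qed.

Definition Ai (x : 'I_2 -> C * C) := (Af h (x i0) (x i1))^-1.
Definition Bi (x : 'I_2 -> C * C) :=
  (1 - q h ^+ 2) * K1f h (x i1) * (K1f h (x i0))^-1 * (Af h (x i0) (x i1))^-1.
Definition Rinv := eadd (T Ai (mon0 2)) (T Bi PEF).

Ltac nz := rewrite ?Af_neq0 ?K1f_neq0 ?K2f_neq0 ?q_neq0 //.
Ltac shiftrw := rewrite ?shift00 ?shift11 ?Af_s10l ?Af_s01l ?Af_s10r ?Af_s01r
   ?K1f_s10 ?K1f_s01 ?K2f_s10 ?K2f_s01.

Lemma RRinv : emul h (Rmat h) Rinv = @eone R 2.
Proof.
rewrite Rmat_T /Rinv !(emulDl, emulDr) !emulT0T !emulTT0 emulTT eoneT.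
apply: funext => M; apply: funext => x.
rewrite /eadd /T prod2 /mshift /PEF mon0_2 !eq_mk2 !mk2E0 !mk2E1 /=.
case: (M i0) => [[] []]; case: (M i1) => [[] []] /=;
rewrite /Ai /Bi /Bf /= ?mk2E0 ?mk2E1; shiftrw; field; nz.
Qed.

Lemma RinvR : emul h Rinv (Rmat h) = @eone R 2.
Proof.
rewrite Rmat_T /Rinv !(emulDl, emulDr) !emulT0T !emulTT0 emulTT eoneT.
apply: funext => M; apply: funext => x.
rewrite /eadd /T prod2 /mshift /PEF mon0_2 !eq_mk2 !mk2E0 !mk2E1 /=.
case: (M i0) => [[] []]; case: (M i1) => [[] []] /=;
rewrite /Ai /Bi /Bf /= ?mk2E0 ?mk2E1; shiftrw; field; nz.
Qed.

Lemma emb_add n m (j : 'I_n -> 'I_m) (a b : Elt R n) : emb j (eadd a b) = eadd (emb j a) (emb j b).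
Proof. by apply: funext => M; apply: funext => x; rewrite /emb /eadd; case: ifP; rewrite ?addr0. Qed.

Lemma embT n m (j : 'I_n -> 'I_m) (f : ('I_n -> C * C) -> C) (P : mon n) (Q : mon m) :
  (forall k, Q (j k) = P k) -> (forall l, l \notin codom j -> Q l = (false, false)) ->
  emb j (T f P) = T (fun x => f (fun k => x (j k))) Q.
Proof.
move=> HQ HQ'; apply: funext => M; apply: funext => x; rewrite /emb /T.
case: (eqVneq M Q) => [->|ne].
  have -> : [forall l, (l \notin codom j) ==> (Q l == (false, false))].
    by apply/forallP => l; apply/implyP => /HQ' ->.
  suff -> : [ffun k => Q (j k)] == P by [].
  by apply/eqP/ffunP => k; rewrite ffunE HQ.
case: ifP => // /forallP H; case: eqP => // HP; case/eqP: ne.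
apply/ffunP => l; case: (boolP (l \in codom j)) => [/codomP [k ->]|nl].
  by rewrite HQ -HP ffunE.
by have := H l; rewrite nl /= => /eqP ->; rewrite HQ'.
Qed.

Lemma ord2P (P : 'I_2 -> Prop) : P i0 -> P i1 -> forall k, P k.
Proof. by move=> H0 H1 k; case: (ord2 k) => ->. Qed.
Lemma ord3P (P : 'I_3 -> Prop) : P j0 -> P j1 -> P j2 -> forall k, P k.
Proof. by move=> H0 H1 H2 k; case: (ord3 k) => ->. Qed.

Ltac embside1 := apply: ord2P => /=; rewrite ?mk3E0 ?mk3E1 ?mk3E2 ?mk2E0 ?mk2E1 ?ffunE //.
Ltac embside2 := apply: ord3P => /=; rewrite ?mk3E0 ?mk3E1 ?mk3E2 ?ffunE; try by [];
    move=> /negP []; apply/codomP; solve [exists i0; done | exists i1; done].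

Lemma R13_T : R13 (Rmat h) = eadd (T (fun y => Af h (y j0) (y j2)) (mon0 3))
   (T (fun y => Bf (y j0) (y j2)) (mk3 (true, false) (false, false) (false, true))).
Proof.
rewrite /R13 Rmat_T emb_add (@embT _ _ _ _ _ (mon0 3)); last 2 first.
  by move=> k; rewrite !ffunE.
  by move=> l; rewrite !ffunE.
rewrite (@embT _ _ _ _ _ (mk3 (true, false) (false, false) (false, true))); [|embside1|embside2].
by [].
Qed.

Lemma R23_T : R23 (Rmat h) = eadd (T (fun y => Af h (y j1) (y j2)) (mon0 3))
   (T (fun y => Bf (y j1) (y j2)) (mk3 (false, false) (true, false) (false, true))).
Proof.
rewrite /R23 Rmat_T emb_add (@embT _ _ _ _ _ (mon0 3)); last 2 first.
  by move=> k; rewrite !ffunE.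
  by move=> l; rewrite !ffunE.
rewrite (@embT _ _ _ _ _ (mk3 (false, false) (true, false) (false, true))); [|embside1|embside2].
by [].
Qed.

Lemma R12_T : R12 (Rmat h) = eadd (T (fun y => Af h (y j0) (y j1)) (mon0 3))
   (T (fun y => Bf (y j0) (y j1)) (mk3 (true, false) (false, true) (false, false))).
Proof.
rewrite /R12 Rmat_T emb_add (@embT _ _ _ _ _ (mon0 3)); last 2 first.
  by move=> k; rewrite !ffunE.
  by move=> l; rewrite !ffunE.
rewrite (@embT _ _ _ _ _ (mk3 (true, false) (false, true) (false, false))); [|embside1|embside2].
by [].
Qed.

Lemma subst_T n m (L : ('I_m -> C * C) -> ('I_n -> C * C)) (xp xm : 'I_n -> Elt R m)
  (phi : ('I_n -> C * C) -> C) (P : mon n) :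
  subst h L xp xm (T phi P) = fun M y => phi (L y) * monimg h xp xm P M y.
Proof.
apply: funext => M''; apply: funext => y; rewrite /subst.
under eq_bigr do rewrite efunT emulT0l.
rewrite (bigD1 P) //= [X in _ + X = _]big1 ?addr0; first by rewrite /T eqxx.
by move=> M /negbTE HM; rewrite /T HM mul0r.
Qed.

Lemma subst_add n m (L : ('I_m -> C * C) -> ('I_n -> C * C)) (xp xm : 'I_n -> Elt R m)
  (a b : Elt R n) :
  subst h L xp xm (eadd a b) = eadd (subst h L xp xm a) (subst h L xp xm b).
Proof.
apply: funext => M''; apply: funext => y; rewrite /subst /eadd.
under eq_bigr do rewrite efunT emulT0l.
under [in X in _ = X + _]eq_bigr do rewrite efunT emulT0l.
under [in X in _ = _ + X]eq_bigr do rewrite efunT emulT0l.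
by rewrite -big_split; apply: eq_bigr => M _; rewrite mulrDl.
Qed.

Lemma enum_I1 : enum 'I_1 = [:: ord0].
Proof. by apply: (inj_map val_inj); rewrite val_enum_ord. Qed.
Lemma enum_I2 : enum 'I_2 = [:: i0; i1].
Proof. by apply: (inj_map val_inj); rewrite val_enum_ord. Qed.

Lemma monimg1 m (xp xm : 'I_1 -> Elt R m) P : monimg h xp xm P =
  emul h (emul h (if (P ord0).1 then xp ord0 else @eone R m) (if (P ord0).2 then xm ord0 else @eone R m))  (@eone R m).
Proof. by rewrite /monimg enum_I1. Qed.
Lemma monimg2 m (xp xm : 'I_2 -> Elt R m) P : monimg h xp xm P =
  emul h (emul h (if (P i0).1 then xp i0 else @eone R m) (if (P i0).2 then xm i0 else @eone R m))
    (emul h (emul h (if (P i1).1 then xp i1 else @eone R m) (if (P i1).2 then xm i1 else @eone R m)) (@eone R m)).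
Proof. by rewrite /monimg enum_I2. Qed.

Lemma j01 : (j0 == j1) = false. Proof. by rewrite eq_sym j10. Qed.
Lemma j02 : (j0 == j2) = false. Proof. by []. Qed.
Lemma j12 : (j1 == j2) = false. Proof. by rewrite eq_sym j21. Qed.
Lemma monk3_2 m : monk j2 m = mk3 (false, false) (false, false) m.
Proof. by apply/ffunP => k; rewrite !ffunE; case: (ord3 k) => ->; rewrite ?eqxx ?j10 ?j20 ?j21 ?j01 ?j02 ?j12. Qed.
Lemma monk3_0 m : monk j0 m = mk3 m (false, false) (false, false).
Proof. by apply/ffunP => k; rewrite !ffunE; case: (ord3 k) => ->; rewrite ?eqxx ?j10 ?j20 ?j21 ?j01 ?j02 ?j12. Qed.

Lemma embDXp01 : emb leg01 (DXp h) =
  eadd (T (fun x => K1f h (x j1)) (mk3 (true, false) (false, false) (false, false)))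
       (T (fun x => (K2f h (x j0))^-1) (mk3 (false, false) (true, false) (false, false))).
Proof.
rewrite DXp_T emb_add (@embT _ _ _ _ _ (mk3 (true, false) (false, false) (false, false)));
  [|embside1|embside2].
rewrite (@embT _ _ _ _ _ (mk3 (false, false) (true, false) (false, false))); [|embside1|embside2].
by [].
Qed.

Lemma DeltaIdR : DeltaId h (Rmat h) = emul h (R13 (Rmat h)) (R23 (Rmat h)).
Proof.
rewrite R13_T R23_T /DeltaId Rmat_T subst_add !subst_T !monimg2 /PEF !mk2E0 !mk2E1 !ffunE /=.
rewrite !emul1r !emul1l embDXp01 Xm_T monk3_2.
rewrite !(emulDl, emulDr) !emulT0T !emulTT0 !emulTT eoneT.
apply: funext => M; apply: funext => x.
rewrite /eadd /T !prod3 /mshift mon0_3 !eq_mk3 !mk3E0 !mk3E1 !mk3E2 /=.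
case: (M j0) => [[] []]; case: (M j1) => [[] []]; case: (M j2) => [[] []] /=;
rewrite ?mul0r ?mulr0 ?add0r ?addr0 //;
rewrite /Bf; shiftrw; rewrite ?Af_addl ?Af_addr ?K2f_add; field; nz.
Qed.

Lemma embDXm12 : emb leg12 (DXm h) =
  eadd (T (fun x => K2f h (x j2)) (mk3 (false, false) (false, true) (false, false)))
       (T (fun x => (K1f h (x j1))^-1) (mk3 (false, false) (false, false) (false, true))).
Proof.
rewrite DXm_T emb_add (@embT _ _ _ _ _ (mk3 (false, false) (false, true) (false, false)));
  [|embside1|embside2].
rewrite (@embT _ _ _ _ _ (mk3 (false, false) (false, false) (false, true))); [|embside1|embside2].
by [].
Qed.

Lemma IdDeltaR : IdDelta h (Rmat h) = emul h (R13 (Rmat h)) (R12 (Rmat h)).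
Proof.
rewrite R13_T R12_T /IdDelta Rmat_T subst_add !subst_T !monimg2 /PEF !mk2E0 !mk2E1 !ffunE /=.
rewrite !emul1r !emul1l embDXm12 Xp_T monk3_0.
rewrite !(emulDl, emulDr) !emulT0T !emulTT0 !emulTT eoneT.
apply: funext => M; apply: funext => x.
rewrite /eadd /T !prod3 /mshift mon0_3 !eq_mk3 !mk3E0 !mk3E1 !mk3E2 /=.
case: (M j0) => [[] []]; case: (M j1) => [[] []]; case: (M j2) => [[] []] /=;
rewrite ?mul0r ?mulr0 ?add0r ?addr0 //;
rewrite /Bf; shiftrw; rewrite ?Af_addl ?Af_addr ?K2f_add; field; nz.
Qed.

End S.

Section S.
Variable R : realType.
Local Notation C := R[i].
Variable h : C.
Hypothesis hq : q h - (q h)^-1 != 0.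
Arguments shift : simpl never.
Arguments Cf : simpl never.
Arguments K1f : simpl never.
Arguments K2f : simpl never.
Arguments Af : simpl never.
Arguments Defs.q : simpl never.

Lemma sum_mon2E (F : mon 2 -> C) : \sum_(M : mon 2) F M =
  let G a := F (mk2 a (true, true)) + F (mk2 a (true, false)) + (F (mk2 a (false, true)) + F (mk2 a (false, false))) in
  G (true, true) + G (true, false) + (G (false, true) + G (false, false)).
Proof. by rewrite sum_mon2 sum_bb !sum_bb. Qed.

Lemma hq' : q h * q h - 1 != 0.
Proof.
have -> : q h * q h - 1 = (q h - (q h)^-1) * q h by rewrite mulrBl mulVf ?q_neq0.
by rewrite mulf_neq0 ?q_neq0.
Qed.
Ltac nz := rewrite ?Af_neq0 ?K1f_neq0 ?K2f_neq0 ?q_neq0 ?hq ?hq' //.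
Ltac shiftrw := rewrite ?shift00 ?shift11 ?Af_s10l ?Af_s01l ?Af_s10r ?Af_s01r
   ?K1f_s10 ?K1f_s01 ?K2f_s10 ?K2f_s01.

Lemma DXpDXm_T : emul h (DXp h) (DXm h) =
  eadd (eadd (T (fun x => K1f h (x i1) * K2f h (x i1)) (mk2 (true, true) (false, false)))
             (T (fun x => K1f h (x i1) * (K1f h (shift (true, false) (x i0)))^-1)
                (mk2 (true, false) (false, true))))
       (eadd (T (fun x => (K2f h (x i0))^-1 * K2f h (shift (true, false) (x i1)))
                (mk2 (false, true) (true, false)))
             (T (fun x => (K2f h (x i0))^-1 * (K1f h (x i0))^-1) (mk2 (false, false) (true, true)))).
Proof.
rewrite DXp_T DXm_T !(emulDl, emulDr) !emulTT.
apply: funext => M; apply: funext => x.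
rewrite /eadd /T /mshift !prod2 !eq_mk2 !ffunE /=.
by case: (M i0) => [[] []]; case: (M i1) => [[] []] /=; rewrite ?shift00; ring.
Qed.

Lemma subst_T' n m (L : ('I_m -> C * C) -> ('I_n -> C * C)) (xp xm : 'I_n -> Elt R m)
  (phi : ('I_n -> C * C) -> C) (P : mon n) :
  subst h L xp xm (T phi P) = emul h (T (fun y => phi (L y)) (mon0 m)) (monimg h xp xm P).
Proof. by rewrite subst_T emulT0l. Qed.

Lemma flip20 : flip2 i0 = i1. Proof. by []. Qed.
Lemma flip21 : flip2 i1 = i0. Proof. by []. Qed.

Ltac fin := rewrite ?flip20 ?flip21 /Cf; shiftrw;
  rewrite ?addw_s ?[addw (_ i1) (_ i0)]addwC; field; nz.

Ltac keytac :=
  rewrite /Delta subst_T' monimg1 mk1E /= ?emul1r ?emul1l ?DXpDXm_T ?DXp_T ?DXm_T ?eoneT;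
  rewrite Rmat_T /Rinv !(emulDl, emulDr);
  rewrite ?emulT0T ?emulTT0 ?emulTT ?emulT0r ?emulTr;
  apply: funext; intros M; apply: funext; intros x;
  rewrite /eadd /tau ?sum_mon2E /=;
  rewrite /T /Ai /Bi /Bf /mshift /PEF /=;
  rewrite ?prod2 ?mon0_2 !eq_mk2 !ffunE /=;
  rewrite ?mul0r ?mulr0 ?add0r ?addr0 ?mul1r ?mulr1;
  case: (M i0) => [[] []]; case: (M i1) => [[] []] /=;
  rewrite ?mul0r ?mulr0 ?add0r ?addr0 ?mul1r ?mulr1 //.

Lemma key00 phi : tau (Delta h (T phi (mk1 (false, false)))) =
   emul h (emul h (Rmat h) (Delta h (T phi (mk1 (false, false))))) (Rinv h).
Proof. keytac. all: fin. Qed.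

Lemma key10 phi : tau (Delta h (T phi (mk1 (true, false)))) =
   emul h (emul h (Rmat h) (Delta h (T phi (mk1 (true, false))))) (Rinv h).
Proof. keytac. all: fin. Qed.

Lemma key01 phi : tau (Delta h (T phi (mk1 (false, true)))) =
   emul h (emul h (Rmat h) (Delta h (T phi (mk1 (false, true))))) (Rinv h).
Proof. keytac. all: fin. Qed.

Lemma key11 phi : tau (Delta h (T phi (mk1 (true, true)))) =
   emul h (emul h (Rmat h) (Delta h (T phi (mk1 (true, true))))) (Rinv h).
Proof. keytac. all: fin. Qed.

End S.

Section S.
Variable R : realType.
Local Notation C := R[i].
Variable h : C.
Hypothesis hq : q h - (q h)^-1 != 0.
Lemma decomp1 (a : Elt R 1) : a =
  eadd (eadd (T (a (mk1 (true, true))) (mk1 (true, true))) (T (a (mk1 (true, false))) (mk1 (true, false))))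
       (eadd (T (a (mk1 (false, true))) (mk1 (false, true))) (T (a (mk1 (false, false))) (mk1 (false, false)))).
Proof.
apply: funext => M; apply: funext => x; rewrite /eadd /T !eq_mk1.
have E : M = mk1 (M ord0) by apply/ffunP => k; rewrite ord1 mk1E.
rewrite {1}E; case: (M ord0) => [[] []] /=; rewrite ?add0r ?addr0 //.
Qed.

Lemma tau_add (a b : Elt R 2) : tau (eadd a b) = eadd (tau a) (tau b).
Proof. by []. Qed.

Lemma Delta_add (a b : Elt R 1) : Delta h (eadd a b) = eadd (Delta h a) (Delta h b).
Proof. by rewrite /Delta subst_add. Qed.

Lemma emulDm (X Y Z : Elt R 2) : emul h (emul h (Rmat h) (eadd X Y)) Z =
  eadd (emul h (emul h (Rmat h) X) Z) (emul h (emul h (Rmat h) Y) Z).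
Proof. by rewrite emulDr emulDl. Qed.

Lemma allkey (a : Elt R 1) :
  tau (Delta h a) = emul h (emul h (Rmat h) (Delta h a)) (Rinv h).
Proof.
rewrite (decomp1 a) !Delta_add !tau_add !emulDm.
by rewrite key11 // key10 // key01 // key00.
Qed.

End S.

Unset Implicit Arguments. Set Strict Implicit. Set Printing Implicit Defensive.

Theorem mainTheorem1 (R : realType) (h : R[i])
  (hq : q h - (q h)^-1 != 0) :
  (exists Rinv : Elt R 2,
     emul h (Rmat h) Rinv = @eone R 2 /\ emul h Rinv (Rmat h) = @eone R 2 /\
     (forall a : Elt R 1, inU h a ->
        tau (Delta h a) = emul h (emul h (Rmat h) (Delta h a)) Rinv)) /\
  DeltaId h (Rmat h) = emul h (R13 (Rmat h)) (R23 (Rmat h)) /\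
  IdDelta h (Rmat h) = emul h (R13 (Rmat h)) (R12 (Rmat h)).
Proof.
split; last by split; [exact: DeltaIdR | exact: IdDeltaR].
exists (Rinv h); split; first exact: RRinv.
split; first exact: RinvR.
by move=> a _; exact: (@allkey R h hq).
Qed.
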